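(* Let $(X,Y)$ be a random pair with $X\in\mathbb{R}^d$ and $Y\in\{+1,-1\}$ with arbitrary joint distribution. Let $\alpha\in[0,1)$ and let $\varphi$ be one of the losses $\varphi_{\mathrm{LR}},\varphi_{\mathrm{LS},\alpha},\varphi_{\mathrm{MLS},\alpha},\varphi_{\mathrm{LSQ}}$, with $\phi(v,y)=\varphi(yv)$. Let $\bar g\in\operatorname{argmin}_{g:\mathbb{R}^d\to\mathbb{R}}\mathbb{E}[\phi(g(X),Y)]$, and let $h(v)=-1$ if $v\le0$ and $h(v)=+1$ if $v>0$. Then $\Pr(h(\bar g(X))\neq Y)=\inf_{f:\mathbb{R}^d\to\{+1,-1\}}\Pr(f(X)\neq Y)$.
   Context: The losses are: $\varphi_{\mathrm{LR}}(v)=-\ln\frac{1}{1+e^{-v}}$; $\varphi_{\mathrm{LS},\alpha}(v)=-(1-\frac{\alpha}{2})\ln\frac{1}{1+e^{-v}}-\frac{\alpha}{2}\ln\frac{1}{1+e^{v}}$; $\varphi_{\mathrm{MLS},\alpha}(v)=-(1-\frac{\alpha}{2})\ln\big(\frac{1-\alpha}{1+e^{-v}}+\frac{\alpha}{2}\big)-\frac{\alpha}{2}\ln\big(\frac{1-\alpha}{1+e^{v}}+\frac{\alpha}{2}\big)$; $\varphi_{\mathrm{LSQ}}(v)=\frac{1}{2(1+e^{v})^2}$. Minimizations/infima are over measurable functions. The left-hand side is the expected zero-one loss (misclassification rate) of the classifier $h\circ\bar g$. *)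

(* Defs.v *)
From HB Require Import structures.
From mathcomp Require Import all_boot all_order all_algebra.
From mathcomp Require Import all_classical all_reals all_analysis.
Set Implicit Arguments. Unset Strict Implicit. Unset Printing Implicit Defensive.
Import Order.TTheory GRing.Theory Num.Theory.
Local Open Scope ring_scope.

Inductive loss_kind := LR | LS | MLS | LSQ.

Section Losses.
Variable R : realType.

Definition phi_LR (v : R) : R := - ln (1 / (1 + expR (- v))).

Definition phi_LS (alpha v : R) : R :=
  - (1 - alpha / 2) * ln (1 / (1 + expR (- v)))
  - (alpha / 2) * ln (1 / (1 + expR v)).

Definition phi_MLS (alpha v : R) : R :=
  - (1 - alpha / 2) * ln ((1 - alpha) / (1 + expR (- v)) + alpha / 2)
  - (alpha / 2) * ln ((1 - alpha) / (1 + expR v) + alpha / 2).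

Definition phi_LSQ (v : R) : R := 1 / (2 * (1 + expR v) ^+ 2).

Definition loss (k : loss_kind) (alpha : R) : R -> R :=
  match k with
  | LR => phi_LR
  | LS => phi_LS alpha
  | MLS => phi_MLS alpha
  | LSQ => phi_LSQ
  end.

Definition hsign (v : R) : R := if v <= 0 then -1 else 1.
End Losses.

(* Main.v *)
Require Import Defs.
From HB Require Import structures.
From mathcomp Require Import all_boot all_order all_algebra.
From mathcomp Require Import all_classical all_reals all_analysis.
From mathcomp Require Import measurable_realfun.
From mathcomp Require Import ring lra.
Import Order.TTheory GRing.Theory Num.Theory.
Set Implicit Arguments. Unset Strict Implicit. Unset Printing Implicit Defensive.
Local Open Scope classical_set_scope.
Local Open Scope ring_scope.

Ltac nz := repeat (apply/andP; split); apply/eqP => ?; lra.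

Section Losses2.
Context (R : realType).

Definition sig (v : R) : R := 1 / (1 + expR (- v)).

Lemma invE (z : R) : 0 < z -> z^-1 = expR (- ln z).
Proof. by move=> z0; rewrite expRN lnK. Qed.

Lemma den_pos (v : R) : 0 < 1 + expR v.
Proof. by rewrite addr_gt0 // expR_gt0. Qed.

Lemma msig : measurable_fun setT sig.
Proof.
rewrite (_ : sig = fun v => expR (- ln (1 + expR (- v)))).
  apply: measurableT_comp; first exact: measurable_expR.
  apply: measurable_funN; apply: measurableT_comp; first exact: measurable_ln.
  apply: measurable_funD => //; apply: measurableT_comp; first exact: measurable_expR.
  exact: measurable_funN.
by apply/funext => v; rewrite /sig div1r invE // den_pos.
Qed.

Lemma sig_pos v : 0 < sig v.
Proof. by rewrite /sig divr_gt0 // den_pos. Qed.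

Lemma sigN v : sig (- v) = 1 - sig v.
Proof.
rewrite /sig opprK expRN.
have e0 := expR_gt0 v.
have e1 : 0 < expR v + 1 by lra.
by field; rewrite (gt_eqF e0) (gt_eqF e1).
Qed.

Lemma sig_lt1 v : sig v < 1.
Proof. have := sig_pos (- v); rewrite sigN; lra. Qed.

Lemma sig0 : sig 0 = 1 / 2.
Proof. by rewrite /sig oppr0 expR0. Qed.

Lemma sig_half v : 0 < v -> 1 / 2 < sig v.
Proof.
move=> v0; have e : expR (- v) < 1 by rewrite -expR0 ltr_expR; lra.
rewrite /sig ltr_pdivlMr ?den_pos //; lra.
Qed.

Lemma sig_gt v : 0 < v -> sig (- v) < sig v.
Proof. by move=> v0; rewrite sigN; have := sig_half v0; lra. Qed.

Lemma sig_t y : 0 < y < 1 -> sig (ln ((1 + y) / (1 - y))) = (1 + y) / 2.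
Proof.
move=> /andP[y0 y1].
have q0 : 0 < (1 + y) / (1 - y) by apply: divr_gt0; lra.
rewrite /sig expRN lnK ?posrE //.
have h1 : 1 - y != 0 by rewrite gt_eqF // subr_gt0.
have h2 : 1 + y != 0 by rewrite gt_eqF //; lra.
rewrite invf_div; field.
by rewrite h2 /=; apply/eqP => h; lra.
Qed.

Lemma lnb (u v : R) : 0 < u -> 0 < v -> 1 - v / u <= ln u - ln v <= u / v - 1.
Proof.
move=> u0 v0; apply/andP; split.
  have := @le_ln1Dx R (v / u - 1) _.
  rewrite addrCA subrr addr0 ln_div ?posrE // => h.
  have : - 1 < v / u - 1 by have := divr_gt0 v0 u0; lra.
  by move/h; lra.
have := @le_ln1Dx R (u / v - 1) _.
rewrite addrCA subrr addr0 ln_div ?posrE // => h.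
have : - 1 < u / v - 1 by have := divr_gt0 u0 v0; lra.
by move/h; lra.
Qed.

Lemma lnb_p (x : R) : 0 < x <= 1 / 2 ->
  x - x ^+ 2 <= ln ((1 + x) / 2) - ln (1 / 2) <= x.
Proof.
move=> /andP[x0 x1].
have p0 : 0 < (1 + x) / 2 by lra.
have h0 : 0 < 1 / 2 :> R by lra.
have /andP[l1 l2] := lnb p0 h0.
have e1 : (1 + x) / 2 / (1 / 2) - 1 = x by field.
have e2 : 1 / 2 / ((1 + x) / 2) = 1 / (1 + x).
  by field; nz.
rewrite e1 e2 in l1 l2; apply/andP; split => //.
apply: le_trans l1.
have : 1 / (1 + x) <= 1 - x + x ^+ 2.
  rewrite ler_pdivrMr; last lra.
  have : 0 <= x ^+ 3 by apply: exprn_ge0; lra.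
  rewrite !exprS expr0; nra.
lra.
Qed.

Lemma lnb_q (x : R) : 0 < x <= 1 / 2 ->
  - x - 2 * x ^+ 2 <= ln ((1 - x) / 2) - ln (1 / 2) <= - x.
Proof.
move=> /andP[x0 x1].
have p0 : 0 < (1 - x) / 2 by lra.
have h0 : 0 < 1 / 2 :> R by lra.
have /andP[l1 l2] := lnb p0 h0.
have e1 : (1 - x) / 2 / (1 / 2) - 1 = - x by field.
have e2 : 1 / 2 / ((1 - x) / 2) = 1 / (1 - x).
  by field; nz.
rewrite e1 e2 in l1 l2; apply/andP; split => //.
apply: le_trans l1.
have : 1 / (1 - x) <= 1 + x + 2 * x ^+ 2.
  rewrite ler_pdivrMr; last lra.
  have : 0 <= x ^+ 2 * (1 - 2 * x) by apply: mulr_ge0; [apply: exprn_ge0; lra|lra].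
  rewrite !exprS expr0; nra.
lra.
Qed.

Definition mg (c v : R) := c * sig v + (1 - c) / 2.
Definition phig (A c v : R) := - A * ln (mg c v) - (1 - A) * ln (mg c (- v)).

Section Phig.
Variables (A c : R).
Hypotheses (hA1 : 1 / 2 < A) (hA2 : A <= 1) (hc1 : 0 < c) (hc2 : c <= 1).
Local Ltac cp := move: (hA1) (hA2) (hc1) (hc2) => ? ? ? ?.

Lemma mg_pos v : 0 < mg c v.
Proof. rewrite /mg; have h1 : 0 < c * sig v by apply: mulr_gt0 => //; exact: sig_pos. cp; lra. Qed.

Lemma mg_le1 v : mg c v <= 1.
Proof. rewrite /mg; have h1 : c * sig v <= c * 1 by apply: ler_wpM2l; [exact: ltW|exact: ltW (sig_lt1 v)]. cp; lra. Qed.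

Lemma phig_ge0 v : 0 <= phig A c v.
Proof.
rewrite /phig.
have l1 := ln_le0 (mg_le1 v); have l2 := ln_le0 (mg_le1 (- v)).
cp; nra.
Qed.

Lemma mphig : measurable_fun setT (phig A c).
Proof.
have mm : forall f : R -> R, measurable_fun setT f ->
    measurable_fun setT (fun v => ln (mg c (f v))).
  move=> f mf; apply: measurableT_comp; first exact: measurable_ln.
  apply: measurable_funD => //; apply: measurable_funM => //.
  exact: measurableT_comp msig mf.
apply: measurable_funB; apply: measurable_funM => //; first exact: (mm id).
apply: (mm (fun v => - v)); exact: measurable_funN.
Qed.

Lemma phig_Q3 v : 0 < v -> phig A c v < phig A c (- v).
Proof.
move=> v0; rewrite /phig opprK.
have lt : mg c (- v) < mg c v by rewrite /mg; have := sig_gt v0; cp; nra.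
have := lt; rewrite -ltr_ln ?posrE ?mg_pos // => hl.
set a := ln (mg c v) in hl *; set b := ln (mg c (- v)) in hl *.
cp; nra.
Qed.

Lemma phig_Q4 r : 1 < r -> exists t, phig A c t < phig A c 0 /\
  phig A c (- t) - phig A c 0 <= r * (phig A c 0 - phig A c t).
Proof.
move=> r1; cp.
set y := (2 * A - 1) * (r - 1) / (2 * (r + 1)).
have ey : y * (2 * (r + 1)) = (2 * A - 1) * (r - 1) by rewrite /y divfK // gt_eqF //; lra.
have y0 : 0 < y by rewrite /y; apply: divr_gt0; [apply: mulr_gt0|]; lra.
have y1 : y <= 1 / 2.
  have : (2 * A - 1) * (r - 1) <= r + 1 by nra.
  nra.
exists (ln ((1 + y) / (1 - y))).
set t := ln _.
have st : sig t = (1 + y) / 2 by apply: sig_t; apply/andP; split; lra.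
have snt : sig (- t) = (1 - y) / 2 by rewrite sigN st; field.
set x := c * y.
have x0 : 0 < x by apply: mulr_gt0.
have xy : x <= y by rewrite /x ler_piMl // ltW.
have ep : mg c t = (1 + x) / 2 by rewrite /mg st /x; field.
have eq : mg c (- t) = (1 - x) / 2 by rewrite /mg snt /x; field.
have e0 : mg c 0 = 1 / 2 by rewrite /mg sig0; field.
rewrite /phig !opprK oppr0 ep eq e0.
have x12 : 0 < x <= 1 / 2 by apply/andP; split; lra.
have /andP[fa1 fa2] := lnb_p x12.
have /andP[fb1 fb2] := lnb_q x12.
set P1 := ln ((1 + x) / 2) in fa1 fa2 *; set Q1 := ln ((1 - x) / 2) in fb1 fb2 *.
set L := ln (1 / 2) in fa1 fa2 fb1 fb2 *.
set al := P1 - L in fa1 fa2; set be := Q1 - L in fb1 fb2.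
have hF : - A * L - (1 - A) * L - (- A * P1 - (1 - A) * Q1) = A * al + (1 - A) * be.
  by rewrite /al /be; ring.
have hE : - A * Q1 - (1 - A) * P1 - (- A * L - (1 - A) * L) = - A * be - (1 - A) * al.
  by rewrite /al /be; ring.
set Fl := x * (2 * A - 1) - x ^+ 2 * (2 - A).
set Eu := x * (2 * A - 1) + x ^+ 2 * (A + 1).
have F1 : Fl <= A * al + (1 - A) * be.
  have h1 : A * (x - x ^+ 2) <= A * al by apply: ler_wpM2l => //; lra.
  have h2 : (1 - A) * (- x - 2 * x ^+ 2) <= (1 - A) * be by apply: ler_wpM2l => //; lra.
  have -> : Fl = A * (x - x ^+ 2) + (1 - A) * (- x - 2 * x ^+ 2) by rewrite /Fl; ring.
  lra.
have E1 : - A * be - (1 - A) * al <= Eu.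
  have h1 : A * (- x - 2 * x ^+ 2) <= A * be by apply: ler_wpM2l => //; lra.
  have h2 : (1 - A) * (x - x ^+ 2) <= (1 - A) * al by apply: ler_wpM2l => //; lra.
  have -> : Eu = - (A * (- x - 2 * x ^+ 2)) - (1 - A) * (x - x ^+ 2) by rewrite /Eu; ring.
  lra.
have k1 : x * (2 * (r + 1)) <= (2 * A - 1) * (r - 1).
  by rewrite -ey ler_wpM2r //; lra.
have Fl0 : 0 < Fl.
  have i1 : x * (2 - A) < 2 * A - 1.
    have : x * (2 - A) <= x * 2 by apply: ler_wpM2l; lra.
    nra.
  have -> : Fl = x * ((2 * A - 1) - x * (2 - A)) by rewrite /Fl; ring.
  by apply: mulr_gt0 => //; lra.
have EF : Eu <= r * Fl.
  have i1 : x * ((A + 1) + r * (2 - A)) <= x * (2 * (r + 1)).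
    apply: ler_wpM2l; first lra.
    nra.
  have i2 : x * (x * ((A + 1) + r * (2 - A))) <= x * ((2 * A - 1) * (r - 1)).
    by apply: ler_wpM2l; lra.
  rewrite -subr_ge0.
  have -> : r * Fl - Eu = x * ((2 * A - 1) * (r - 1)) - x * (x * ((A + 1) + r * (2 - A))).
    by rewrite /Fl /Eu; ring.
  lra.
split; first lra.
rewrite hE hF.
have : r * Fl <= r * (A * al + (1 - A) * be) by apply: ler_wpM2l; lra.
lra.
Qed.

End Phig.


Lemma phig_all (A c : R) : 1 / 2 < A -> A <= 1 -> 0 < c -> c <= 1 ->
  let f := phig A c in
  [/\ (forall v, 0 <= f v), measurable_fun setT f,
      (forall v, 0 < v -> f v < f (- v)) &
      (forall r, 1 < r -> exists t, f t < f 0 /\ f (- t) - f 0 <= r * (f 0 - f t))].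
Proof.
move=> h1 h2 h3 h4 f; split.
- exact: phig_ge0.
- exact: mphig.
- exact: phig_Q3.
- exact: phig_Q4.
Qed.

Lemma LSQE : phi_LSQ (R := R) = fun v => sig (- v) ^+ 2 / 2.
Proof.
apply/funext => v; rewrite /phi_LSQ /sig opprK.
have := den_pos v; set z := 1 + expR v => z0.
by field; rewrite gt_eqF.
Qed.

Lemma LSQ_all :
  let f := phi_LSQ (R := R) in
  [/\ (forall v, 0 <= f v), measurable_fun setT f,
      (forall v, 0 < v -> f v < f (- v)) &
      (forall r, 1 < r -> exists t, f t < f 0 /\ f (- t) - f 0 <= r * (f 0 - f t))].
Proof.
move=> f; rewrite /f LSQE; split.
- move=> v; apply: divr_ge0 => //; exact: exprn_ge0 (ltW (sig_pos _)).
- apply: measurable_funM => //; apply: measurable_funX.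
  apply: measurableT_comp; [exact: msig|exact: measurable_funN].
- move=> v v0; rewrite opprK; have h := sig_gt v0; have h0 := sig_pos (- v).
  rewrite !expr2; nra.
- move=> r r1.
  set y := (r - 1) / (r + 1).
  have ey : y * (r + 1) = r - 1 by rewrite /y divfK // gt_eqF //; lra.
  have y0 : 0 < y by rewrite /y; apply: divr_gt0; lra.
  have y1 : y < 1 by nra.
  exists (ln ((1 + y) / (1 - y))).
  set t := ln _.
  have st : sig t = (1 + y) / 2 by apply: sig_t; apply/andP; split; lra.
  have snt : sig (- t) = (1 - y) / 2 by rewrite sigN st; field.
  rewrite opprK oppr0 st snt sig0 !expr2; split; nra.
Qed.

Lemma loss_all (k : loss_kind) (a : R) : 0 <= a -> a < 1 ->
  let f := loss k a in
  [/\ (forall v, 0 <= f v), measurable_fun setT f,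
      (forall v, 0 < v -> f v < f (- v)) &
      (forall r, 1 < r -> exists t, f t < f 0 /\ f (- t) - f 0 <= r * (f 0 - f t))].
Proof.
move=> a0 a1; case: k => /=.
- rewrite (_ : phi_LR (R := R) = phig 1 1).
    by apply: phig_all; lra.
  apply/funext => v; rewrite /phig /mg /phi_LR /sig subrr mul0r mul0r subr0 addr0 mul1r.
  by rewrite mulN1r div1r.
- rewrite (_ : phi_LS a = phig (1 - a / 2) 1).
    by apply: phig_all; lra.
  apply/funext => v; rewrite /phig /mg /phi_LS /sig subrr mul0r !addr0 !mul1r opprK.
  by rewrite (_ : 1 - (1 - a / 2) = a / 2) //; ring.
- rewrite (_ : phi_MLS a = phig (1 - a / 2) (1 - a)).
    by apply: phig_all; lra.
  apply/funext => v; rewrite /phig /mg /phi_MLS /sig opprK !div1r.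
  rewrite (_ : 1 - (1 - a / 2) = a / 2); last by ring.
  by rewrite (_ : (1 - (1 - a)) / 2 = a / 2) //; ring.
- exact: LSQ_all.
Qed.

End Losses2.

Section Abstract.
Context (R : realType) (dm : measure_display) (Omega : measurableType dm)
  (P : probability Omega R) (dT : measure_display) (T : measurableType dT)
  (X : Omega -> T) (mX : measurable_fun setT X)
  (phi : R -> R) (phi_ge0 : forall v, 0 <= phi v)
  (mphi : measurable_fun setT phi).

Definition risk (Y : Omega -> R) (g : T -> R) : \bar R :=
  (\int[P]_w (phi (Y w * g (X w)))%:E)%E.

Lemma mpre (f : Omega -> R) (B : set R) : measurable_fun setT f ->
  measurable B -> measurable (f @^-1` B).
Proof. by move=> mf mB; rewrite -[_ @^-1` _]setTI; apply: mf. Qed.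

Lemma mpreT (f : T -> R) (B : set R) : measurable_fun setT f ->
  measurable B -> measurable (f @^-1` B).
Proof. by move=> mf mB; rewrite -[_ @^-1` _]setTI; apply: mf. Qed.

Lemma mpreX (C : set T) : measurable C -> measurable (X @^-1` C).
Proof. by move=> mC; rewrite -[_ @^-1` _]setTI; apply: mX. Qed.


Lemma finE (x : \bar R) : x \is a fin_num -> exists r : R, x = r%:E.
Proof. by move=> h; exists (fine x); rewrite fineK. Qed.

Lemma Pfin (S : set Omega) : measurable S -> exists r : R, P S = r%:E /\ 0 <= r <= 1.
Proof.
move=> mS; have h0 : (0 <= P S)%E by [].
have h1 := probability_le1 P mS.
have [r Er] : exists r : R, P S = r%:E.
  apply: finE; rewrite ge0_fin_numE //; exact: (le_lt_trans h1 (ltry 1)).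
by exists r; split => //; move: h0 h1; rewrite Er !lee_fin => -> ->.
Qed.

Definition Sp (Y : Omega -> R) (C : set T) := X @^-1` C `&` [set w | Y w = 1].
Definition Sm (Y : Omega -> R) (C : set T) := X @^-1` C `&` [set w | Y w = -1].

Lemma mSp (Y : Omega -> R) C : measurable_fun setT Y -> measurable C -> measurable (Sp Y C).
Proof. by move=> mY mC; apply: measurableI; [exact: mpreX|exact: mpre mY (measurable_set1 1)]. Qed.

Lemma mSm (Y : Omega -> R) C : measurable_fun setT Y -> measurable C -> measurable (Sm Y C).
Proof. by move=> mY mC; apply: measurableI; [exact: mpreX|exact: mpre mY (measurable_set1 (-1))]. Qed.

Lemma int_addc (S : set Omega) (f : Omega -> R) (c : R) : measurable S ->
  measurable_fun setT f -> (forall w, 0 <= f w) -> 0 <= c ->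
  (\int[P]_(w in S) (f w + c)%:E = \int[P]_(w in S) (f w)%:E + c%:E * P S)%E.
Proof.
move=> mS mf f0 c0.
rewrite (eq_integral (fun w => (f w)%:E + cst c%:E w)%E); last by move=> w _; rewrite EFinD.
rewrite ge0_integralD //; try (by move=> w _; rewrite lee_fin);
  try (by apply/measurable_EFinP; exact: measurable_funS mf); try exact: measurable_cst.
by rewrite integral_cst.
Qed.

Lemma int_cst (S : set Omega) (c : R) : measurable S ->
  (\int[P]_(w in S) c%:E = c%:E * P S)%E.
Proof. by move=> mS; rewrite -(integral_cst P mS c%:E). Qed.


Lemma pow_unb (r : R) : 1 < r -> forall M : R, exists N : nat, M < r ^+ N.
Proof.
move=> r1 M.
have bern : forall n : nat, 1 + n%:R * (r - 1) <= r ^+ n.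
  elim => [|n IH]; first by rewrite mul0r addr0 expr0.
  rewrite exprS -addn1 natrD.
  have n0 : 0 <= n%:R :> R by [].
  have h1 : r * (1 + n%:R * (r - 1)) <= r * r ^+ n by rewrite ler_wpM2l // ltW // (lt_trans ltr01).
  have h2 : 0 <= n%:R * ((r - 1) * (r - 1)) by apply: mulr_ge0 => //; rewrite -expr2 sqr_ge0.
  nra.
have h0 : 0 <= `|M| / (r - 1) by apply: divr_ge0 => //; rewrite subr_ge0 ltW.
have := archi_boundP h0; set N := Num.bound _ => hN.
exists N; apply: (le_lt_trans (ler_norm M)); apply: (lt_le_trans _ (bern N)).
have : `|M| < N%:R * (r - 1) by rewrite -ltr_pdivrMr // subr_gt0.
lra.
Qed.


Lemma le_lim_r (a b : R) : 0 <= b -> (forall r, 1 < r -> a <= r * b) -> a <= b.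
Proof.
move=> b0 H; apply/ler_addgt0Pr => e e0.
have b10 : 0 < b + 1 by lra.
set q := e / (b + 1).
have q0 : 0 < q by apply: divr_gt0.
have hq : q * (b + 1) = e by rewrite /q divfK // gt_eqF.
have h1 : 1 < 1 + q by lra.
have := H _ h1.
nra.
Qed.

Lemma le_r1E (A B : set Omega) : measurable A -> measurable B ->
  (forall r, 1 < r -> (P A <= r%:E * P B)%E) -> (P A <= P B)%E.
Proof.
move=> mA mB H.
have [a [Ea _]] := Pfin mA; have [b [Eb /andP[b0 _]]] := Pfin mB.
rewrite Ea Eb lee_fin; apply: le_lim_r => // r r1.
by have := H r r1; rewrite Ea Eb -EFinM lee_fin.
Qed.

Section Opt.
Variables (Y : Omega -> R) (g : T -> R).
Hypotheses (mY : measurable_fun setT Y) (HY : forall w, Y w = 1 \/ Y w = -1)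
  (mg : measurable_fun setT g)
  (hopt : forall g', measurable_fun setT g' -> (risk Y g <= risk Y g')%E).

Lemma mF (u : T -> R) : measurable_fun setT u ->
  measurable_fun setT (fun w => (phi (Y w * u (X w)))%:E).
Proof.
move=> mu; apply/measurable_EFinP.
apply: measurableT_comp => //; apply: measurable_funM => //.
exact: measurableT_comp.
Qed.

Lemma risk_fin : risk Y g \is a fin_num.
Proof.
have h0 : (0 <= risk Y g)%E by apply: integral_ge0 => w _; rewrite lee_fin.
rewrite ge0_fin_numE //.
apply: (le_lt_trans (hopt (g' := fun _ => 0) _)) => //.
rewrite /risk (eq_integral (fun _ => (phi 0)%:E)); last by move=> w _; rewrite mulr0.
by rewrite integral_cst //= probability_setT mule1 ltry.
Qed.

Lemma int_fin (S : set Omega) : measurable S ->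
  (\int[P]_(w in S) (phi (Y w * g (X w)))%:E)%E \is a fin_num.
Proof.
move=> mS; have h0 : (0 <= \int[P]_(w in S) (phi (Y w * g (X w)))%:E)%E.
  by apply: integral_ge0 => w _; rewrite lee_fin.
rewrite ge0_fin_numE //; apply: (le_lt_trans _ (_ : risk Y g < +oo)%E).
  apply: ge0_subset_integral => //; first exact: mF.
  by move=> w _; rewrite lee_fin.
by move: risk_fin; rewrite ge0_fin_numE //; apply: integral_ge0 => w _; rewrite lee_fin.
Qed.

Lemma local_opt (C : set T) (u : T -> R) : measurable C -> measurable_fun setT u ->
  (\int[P]_(w in X @^-1` C) (phi (Y w * g (X w)))%:E <=
   \int[P]_(w in X @^-1` C) (phi (Y w * u (X w)))%:E)%E.
Proof.
move=> mC mu.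
pose g' := fun x => if x \in C then u x else g x.
have mg' : measurable_fun setT g'.
  apply: measurable_fun_ifT => //.
  apply: (measurable_fun_bool true); rewrite setTI.
  rewrite (_ : _ @^-1` _ = C) //; apply/seteqP; split => x /=.
    by move/set_mem.
  by move=> /mem_set ->.
have := hopt mg'.
have mS := mpreX mC.
rewrite /risk -(setUv (X @^-1` C)).
have dS : [disjoint X @^-1` C & ~` (X @^-1` C)] by rewrite disj_set2E setICr.
rewrite !ge0_integral_setU //; first last.
- by move=> w _; rewrite lee_fin.
- by rewrite setUv; apply: mF.
- exact: measurableC.
- by move=> w _; rewrite lee_fin.
- by rewrite setUv; apply: mF.
- exact: measurableC.
rewrite [X in (_ <= _ + X)%E](eq_integral (fun w => (phi (Y w * g (X w)))%:E)); last first.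
  by move=> w; rewrite inE /= /g' => h; rewrite memNset.
rewrite [X in (_ <= X + _)%E](eq_integral (fun w => (phi (Y w * u (X w)))%:E)); last first.
  by move=> w; rewrite inE /= /g' => h; rewrite mem_set.
by rewrite leeD2rE //; apply: int_fin; exact: measurableC.
Qed.


Lemma split_int (C : set T) (f : Omega -> \bar R) : measurable C ->
  measurable_fun setT f -> (forall w, (0 <= f w)%E) ->
  (\int[P]_(w in X @^-1` C) f w = \int[P]_(w in Sp Y C) f w + \int[P]_(w in Sm Y C) f w)%E.
Proof.
move=> mC mf f0.
have -> : X @^-1` C = Sp Y C `|` Sm Y C.
  apply/seteqP; split => w /=.
    by move=> h; case: (HY w) => e; [left|right].
  by case=> -[].
rewrite ge0_integral_setU //.
- exact: mSp.
- exact: mSm.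
- exact: measurable_funS mf.
- rewrite disj_set2E; apply/eqP/seteqP; split => w // [[_ h1] [_ h2]].
  rewrite /= in h1 h2; lra.
Qed.

Lemma flip_slice (C : set T) (a b : R) : measurable C -> 0 <= a -> 0 <= b ->
  (forall x, C x -> a + phi (g x) <= phi (- g x) <= b + phi (g x)) ->
  (a%:E * P (Sm Y C) <= b%:E * P (Sp Y C))%E.
Proof.
move=> mC a0 b0 hab.
have mng : measurable_fun setT (fun x => - g x) by exact: measurable_funN.
have h := local_opt mC mng.
have F0 : forall (u : T -> R) w, (0 <= (phi (Y w * u (X w)))%:E)%E.
  by move=> u w; rewrite lee_fin.
rewrite (split_int mC (mF mg) (F0 g)) (split_int mC (mF mng) (F0 _)) in h.
have mSp' := mSp mY mC; have mSm' := mSm mY mC.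
have mFr : forall u : T -> R, measurable_fun setT u ->
    measurable_fun setT (fun w => phi (Y w * u (X w))).
  move=> u mu; apply: measurableT_comp => //; apply: measurable_funM => //.
  exact: measurableT_comp.
have mFS : forall (u : T -> R) (c : R) (S : set Omega), measurable_fun setT u ->
    measurable_fun S (fun w => (phi (Y w * u (X w)) + c)%:E).
  move=> u c S mu; apply/measurable_EFinP.
  apply: (measurable_funS measurableT (subsetT _)); apply: measurable_funD => //.
  exact: mFr.
have mFS0 : forall (u : T -> R) (S : set Omega), measurable_fun setT u ->
    measurable_fun S (fun w => (phi (Y w * u (X w)))%:E).
  move=> u S mu; apply: (measurable_funS measurableT (subsetT _)); exact: mF.
have hJ1 : (\int[P]_(w in Sp Y C) (phi (Y w * - g (X w)))%:E <=
     \int[P]_(w in Sp Y C) (phi (Y w * g (X w)))%:E + b%:E * P (Sp Y C))%E.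
  rewrite -int_addc //; last exact: mFr.
  apply: ge0_le_integral => //; try exact: (mFS _ _ _ mg); try exact: (mFS _ _ _ mng);
    try exact: (mFS0 _ _ mg); try exact: (mFS0 _ _ mng).
  - by move=> w _; rewrite lee_fin.
  move=> w; rewrite /Sp /Sm => -[hC hY]; rewrite hY !mul1r lee_fin addrC.
  by case/andP: (hab _ hC).
have hJ2 : (\int[P]_(w in Sm Y C) (phi (Y w * - g (X w)))%:E + a%:E * P (Sm Y C) <=
     \int[P]_(w in Sm Y C) (phi (Y w * g (X w)))%:E)%E.
  rewrite -int_addc //; last exact: (mFr _ mng).
  apply: ge0_le_integral => //; try exact: (mFS _ _ _ mg); try exact: (mFS _ _ _ mng);
    try exact: (mFS0 _ _ mg); try exact: (mFS0 _ _ mng).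
  - by move=> w _; rewrite lee_fin addr_ge0.
  move=> w; rewrite /Sp /Sm => -[hC hY]; rewrite hY !mulN1r opprK lee_fin addrC.
  by case/andP: (hab _ hC).
have [i1 E1] := finE (int_fin mSp').
have [i2 E2] := finE (int_fin mSm').
have [pp [Epp _]] := Pfin mSp'.
have [pm [Epm /andP[pm0 _]]] := Pfin mSm'.
rewrite Epp Epm E1 E2 in hJ1 hJ2 h *.
have [j1 Ej1] : exists r : R, (\int[P]_(w in Sp Y C) (phi (Y w * - g (X w)))%:E = r%:E)%E.
  apply: finE; rewrite ge0_fin_numE; last by apply: integral_ge0 => w _; rewrite lee_fin.
  by apply: (le_lt_trans hJ1); rewrite -EFinM -EFinD ltry.
have [j2 Ej2] : exists r : R, (\int[P]_(w in Sm Y C) (phi (Y w * - g (X w)))%:E = r%:E)%E.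
  apply: finE; rewrite ge0_fin_numE; last by apply: integral_ge0 => w _; rewrite lee_fin.
  have hj0 : (0 <= a%:E * pm%:E)%E.
    by rewrite -EFinM lee_fin; apply: mulr_ge0.
  apply: (le_lt_trans _ (ltry i2)); apply: le_trans hJ2.
  by rewrite leeDl.
rewrite Ej1 Ej2 in hJ1 hJ2 h.
rewrite -!EFinM -!EFinD !lee_fin in hJ1 hJ2 h *.
lra.
Qed.



Definition D0 x := phi (- g x) - phi (g x).

Lemma mD0 : measurable_fun setT D0.
Proof.
apply: measurable_funB; apply: measurableT_comp => //; exact: measurable_funN.
Qed.

Definition U (C : set T) (lo hi : R) := C `&` [set x | lo < D0 x <= hi].

Lemma mU C lo hi : measurable C -> measurable (U C lo hi).
Proof.
move=> mC; apply: measurableI => //.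
rewrite (_ : [set x | _] = D0 @^-1` [set` `]lo, hi]]).
  exact: mpreT mD0 (measurable_itv _).
by apply/seteqP; split => x /=; rewrite in_itv.
Qed.

Lemma SmU C1 C2 : Sm Y (C1 `|` C2) = Sm Y C1 `|` Sm Y C2.
Proof. by rewrite /Sm preimage_setU setIUl. Qed.
Lemma SpU C1 C2 : Sp Y (C1 `|` C2) = Sp Y C1 `|` Sp Y C2.
Proof. by rewrite /Sp preimage_setU setIUl. Qed.

Lemma addU (r : R) C1 C2 : measurable C1 -> measurable C2 -> C1 `&` C2 = set0 ->
  (P (Sm Y C1) <= r%:E * P (Sp Y C1))%E -> (P (Sm Y C2) <= r%:E * P (Sp Y C2))%E ->
  (P (Sm Y (C1 `|` C2)) <= r%:E * P (Sp Y (C1 `|` C2)))%E.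
Proof.
move=> m1 m2 d12 h1 h2.
have dis : forall Z : Omega -> R -> Prop, (X @^-1` C1 `&` [set w | Z w 0]) `&` (X @^-1` C2 `&` [set w | Z w 0]) = set0.
  move=> Z; apply/seteqP; split => w // [[w1 _] [w2 _]].
  by have : (C1 `&` C2) (X w) by []; rewrite d12.
have e1 : P (Sm Y (C1 `|` C2)) = (P (Sm Y C1) + P (Sm Y C2))%E.
  by rewrite SmU; apply: (measureU P (mSm mY m1) (mSm mY m2) (dis (fun w _ => Y w = -1))).
have e2 : P (Sp Y (C1 `|` C2)) = (P (Sp Y C1) + P (Sp Y C2))%E.
  by rewrite SpU; apply: (measureU P (mSp mY m1) (mSp mY m2) (dis (fun w _ => Y w = 1))).
rewrite e1 e2.
have [a [Ea _]] := Pfin (mSm mY m1); have [b [Eb _]] := Pfin (mSm mY m2).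
have [c [Ec _]] := Pfin (mSp mY m1); have [e [Ee _]] := Pfin (mSp mY m2).
rewrite Ea Eb Ec Ee in h1 h2 *; rewrite -!EFinM !lee_fin in h1 h2.
rewrite -!EFinD -!EFinM !lee_fin.
lra.
Qed.


Lemma slice_n (C : set T) (r : R) : measurable C -> 1 < r ->
  (forall x, C x -> 0 < D0 x) ->
  forall n lo, 0 < lo ->
  (P (Sm Y (U C lo (lo * r ^+ n))) <= r%:E * P (Sp Y (U C lo (lo * r ^+ n))))%E.
Proof.
move=> mC r1 hpos; elim => [|n IH] lo lo0.
  rewrite expr0 mulr1 (_ : U C lo lo = set0).
    by rewrite /Sm /Sp !preimage_set0 !set0I measure0; apply: mule_ge0 => //; rewrite lee_fin ltW // (lt_trans ltr01).
  by apply/seteqP; split => x // [_ /= h]; lra.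
have rn0 : 0 < r ^+ n by apply: exprn_gt0; exact: (lt_trans ltr01).
have a0 : 0 < lo * r ^+ n by apply: mulr_gt0.
have eb : lo * r ^+ n.+1 = r * (lo * r ^+ n) by rewrite exprS mulrCA.
have le1 : lo <= lo * r ^+ n.
  by apply: ler_peMr; [exact: ltW|exact: exprn_ege1 (ltW r1)].
have le2 : lo * r ^+ n <= lo * r ^+ n.+1 by rewrite eb; apply: ler_peMl; apply: ltW.
rewrite (_ : U C lo (lo * r ^+ n.+1) = U C lo (lo * r ^+ n) `|` U C (lo * r ^+ n) (lo * r ^+ n.+1)); last first.
  apply/seteqP; split => x /=.
    move=> [hC /andP[h1 h2]]; have [h3|h3] := leP (D0 x) (lo * r ^+ n).
      by left; split => //; apply/andP.
    by right; split => //; apply/andP.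
  by case=> -[hC /andP[h1 h2]]; split => //; apply/andP; split; lra.
apply: addU.
- exact: mU.
- exact: mU.
- by apply/seteqP; split => x // [[_ /andP[_ h1]] [_ /andP[h2 _]]]; lra.
- exact: IH.
have mV := mU (lo * r ^+ n) (lo * r ^+ n.+1) mC.
have := @flip_slice (U C (lo * r ^+ n) (lo * r ^+ n.+1)) (lo * r ^+ n) (lo * r ^+ n.+1) mV (ltW a0) (le_trans (ltW a0) le2).
have [pm [Epm _]] := Pfin (mSm mY mV); have [pp [Epp _]] := Pfin (mSp mY mV).
rewrite Epm Epp -!EFinM !lee_fin => h.
have {h} h : lo * r ^+ n * pm <= lo * r ^+ n.+1 * pp.
  apply: h => x [hC /andP[h1 h2]]; rewrite /D0 in h1 h2; apply/andP; split; lra.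
rewrite eb in h; move: h a0; set a := lo * r ^+ n => h a0'; nra.
Qed.


Lemma slice_all (C : set T) (r : R) : measurable C -> 1 < r ->
  (forall x, C x -> 0 < D0 x) ->
  (P (Sm Y C) <= r%:E * P (Sp Y C))%E.
Proof.
move=> mC r1 hpos.
have r0 : 0 < r by exact: (lt_trans ltr01).
have rN0 : forall N, 0 < r ^+ N by move=> N; apply: exprn_gt0.
pose F N := U C (r ^+ N)^-1 (r ^+ N).
have hF : forall N, (P (Sm Y (F N)) <= r%:E * P (Sp Y (F N)))%E.
  move=> N; have h0 : 0 < (r ^+ N)^-1 by rewrite invr_gt0.
  have := slice_n mC r1 hpos (N + N) h0.
  by rewrite exprD mulrA mulVf ?gt_eqF // mul1r.
have mF' : forall N, measurable (Sm Y (F N)) by move=> N; apply: mSm => //; exact: mU.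
have ndF : nondecreasing_seq (fun N => Sm Y (F N)).
  move=> n m nm; apply/subsetPset => w [[hC /andP[h1 h2]] hY]; split => //; split => //; apply/andP; split.
    apply: le_lt_trans h1; rewrite lef_pV2 ?posrE ?rN0 //.
    by rewrite ler_eXn2l.
  by apply: (le_trans h2); rewrite ler_eXn2l.
have UE : \bigcup_N Sm Y (F N) = Sm Y C.
  apply/seteqP; split => w.
    by move=> [N _ [[hC _] hY]].
  move=> [hC hY].
  have Dp := hpos _ hC.
  have [N hN] := pow_unb r1 (D0 (X w) + (D0 (X w))^-1).
  exists N => //; split => //; split => //; apply/andP; split.
    have i0 : 0 < (D0 (X w))^-1 by rewrite invr_gt0.
    have e1 : D0 (X w) * (D0 (X w))^-1 = 1 by rewrite mulfV ?gt_eqF.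
    have e2 : (r ^+ N)^-1 * r ^+ N = 1 by rewrite mulVf ?gt_eqF.
    have i1 : 0 < (r ^+ N)^-1 by rewrite invr_gt0.
    move: (rN0 N) hN e1 e2 i0 i1; set a := r ^+ N; set b := D0 (X w); set c := b^-1; set e := a^-1.
    move=> a0 ha e1 e2 c0 e0.
    have h1 : 1 < a * b by nra.
    have : e * 1 < e * (a * b) by rewrite ltr_pM2l.
    by rewrite mulr1 mulrA e2 mul1r.
  have i0 : 0 < (D0 (X w))^-1 by rewrite invr_gt0.
  lra.
have mU' : measurable (\bigcup_N Sm Y (F N)) by rewrite UE; apply: mSm.
have cv := @nondecreasing_cvg_mu _ _ R P _ mF' mU' ndF.
rewrite UE in cv.
move/cvg_lim : (cv) => <- //; apply: lime_le.
  by apply/cvg_ex; eexists; exact: cv.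
apply: nearW => N /=; apply: (le_trans (hF N)); apply: lee_wpmul2l.
  by rewrite lee_fin ltW.
apply: le_measure; rewrite ?inE; try apply: mSp => //; try exact: mU.
by move=> w [[hC _] hY].
Qed.


Lemma zero_set (C : set T) (r t : R) : measurable C ->
  (forall x, C x -> g x = 0) -> phi t < phi 0 ->
  phi (- t) - phi 0 <= r * (phi 0 - phi t) ->
  (P (Sp Y C) <= r%:E * P (Sm Y C))%E.
Proof.
move=> mC hz ht hr.
have mt : measurable_fun setT (fun _ : T => t) by exact: measurable_cst.
have h := local_opt mC mt.
have F0 : forall (u : T -> R) w, (0 <= (phi (Y w * u (X w)))%:E)%E.
  by move=> u w; rewrite lee_fin.
rewrite (split_int mC (mF mg) (F0 g)) (split_int mC (mF mt) (F0 _)) in h.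
have mSp' := mSp mY mC; have mSm' := mSm mY mC.
rewrite (eq_integral (fun _ => (phi 0)%:E)) in h; last first.
  by move=> w; rewrite inE => -[hC hY]; rewrite hz // mulr0.
rewrite [X in (_ + X <= _)%E](eq_integral (fun _ => (phi 0)%:E)) in h; last first.
  by move=> w; rewrite inE => -[hC hY]; rewrite hz // mulr0.
rewrite [X in (_ <= X + _)%E](eq_integral (fun _ => (phi t)%:E)) in h; last first.
  by move=> w; rewrite inE => -[hC hY]; rewrite hY mul1r.
rewrite [X in (_ <= _ + X)%E](eq_integral (fun _ => (phi (- t))%:E)) in h; last first.
  by move=> w; rewrite inE => -[hC hY]; rewrite hY mulN1r.
rewrite !int_cst // in h.
have [pp [Epp /andP[pp0 _]]] := Pfin mSp'.
have [pm [Epm /andP[pm0 _]]] := Pfin mSm'.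
rewrite Epp Epm -!EFinM -!EFinD lee_fin in h *.
rewrite lee_fin.
have h2 : (phi 0 - phi t) * pp <= (phi (- t) - phi 0) * pm by lra.
have h3 : (phi (- t) - phi 0) * pm <= r * (phi 0 - phi t) * pm by apply: ler_wpM2r.
have h4 : (phi 0 - phi t) * pp <= (phi 0 - phi t) * (r * pm) by lra.
by rewrite ler_pM2l ?subr_gt0 in h4.
Qed.

End Opt.

Lemma measSU (C1 C2 : set T) (E : set Omega) : measurable C1 -> measurable C2 ->
  measurable E -> C1 `&` C2 = set0 ->
  P (X @^-1` (C1 `|` C2) `&` E) = (P (X @^-1` C1 `&` E) + P (X @^-1` C2 `&` E))%E.
Proof.
move=> m1 m2 mE d12.
rewrite preimage_setU setIUl; apply: measureU.
- by apply: measurableI => //; exact: mpreX.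
- by apply: measurableI => //; exact: mpreX.
apply/seteqP; split => w // [[w1 _] [w2 _]].
by have : (C1 `&` C2) (X w) by []; rewrite d12.
Qed.

Section KeyH.
Hypothesis Q3 : forall v, 0 < v -> phi v < phi (- v).
Hypothesis Q4 : forall r, 1 < r -> exists t, phi t < phi 0 /\ phi (- t) - phi 0 <= r * (phi 0 - phi t).

Section K1.
Variables (Y : Omega -> R) (g : T -> R).
Hypotheses (mY : measurable_fun setT Y) (HY : forall w, Y w = 1 \/ Y w = -1)
  (mg : measurable_fun setT g)
  (hopt : forall g', measurable_fun setT g' -> (risk Y g <= risk Y g')%E).

Lemma key_pos (C : set T) : measurable C -> (forall x, C x -> 0 < g x) ->
  (P (Sm Y C) <= P (Sp Y C))%E.
Proof.
move=> mC hC; apply: le_r1E; try exact: mSm; try exact: mSp.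
move=> r r1; apply: (slice_all mY HY mg hopt mC r1).
by move=> x Cx; rewrite /D0 subr_gt0; apply: Q3; exact: hC.
Qed.
End K1.

Section K2.
Variables (Y : Omega -> R) (g : T -> R).
Hypotheses (mY : measurable_fun setT Y) (HY : forall w, Y w = 1 \/ Y w = -1)
  (mg : measurable_fun setT g)
  (hopt : forall g', measurable_fun setT g' -> (risk Y g <= risk Y g')%E).



Lemma key_neg (C : set T) : measurable C -> (forall x, C x -> g x <= 0) ->
  (P (Sp Y C) <= P (Sm Y C))%E.
Proof.
move=> mC hC.
have mY' : measurable_fun setT (fun w => - Y w) by exact: measurable_funN.
have HY' : forall w, - Y w = 1 \/ - Y w = -1.
  by move=> w; case: (HY w) => ->; [right|left]; rewrite ?opprK.
have mg' : measurable_fun setT (fun x => - g x) by exact: measurable_funN.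
have hopt' : forall g' : T -> R, measurable_fun setT g' ->
    (risk (fun w => (- Y w)%R) (fun x => (- g x)%R) <= risk (fun w => (- Y w)%R) g')%E.
  move=> g' mg''.
  have e1 : risk (fun w => (- Y w)%R) (fun x => (- g x)%R) = risk Y g.
    by rewrite /risk; apply: eq_integral => w _; rewrite mulrNN.
  have e2 : risk (fun w => (- Y w)%R) g' = risk Y (fun x => (- g' x)%R).
    by rewrite /risk; apply: eq_integral => w _; rewrite mulNr mulrN.
  rewrite e1 e2; apply: hopt; exact: measurable_funN.
have eSp : forall C', Sm (fun w => - Y w) C' = Sp Y C'.
  move=> C'; rewrite /Sm /Sp; congr (_ `&` _); apply/seteqP; split => w /= h; lra.
have eSm : forall C', Sp (fun w => - Y w) C' = Sm Y C'.
  move=> C'; rewrite /Sm /Sp; congr (_ `&` _); apply/seteqP; split => w /= h; lra.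
pose C1 := C `&` [set x | g x < 0]; pose C2 := C `&` [set x | g x = 0].
have mC1 : measurable C1.
  apply: measurableI => //; rewrite (_ : [set x | _] = g @^-1` [set` `]-oo, 0[]).
    exact: mpreT mg (measurable_itv _).
  by apply/seteqP; split => x /=; rewrite in_itv.
have mC2 : measurable C2.
  by apply: measurableI => //; exact: mpreT mg (measurable_set1 0).
have CE : C = C1 `|` C2.
  apply/seteqP; split => x.
    by move=> Cx; have := hC _ Cx; rewrite le_eqVlt => /orP[/eqP h|h]; [right|left].
  by case=> -[].
have d12 : C1 `&` C2 = set0.
  by apply/seteqP; split => x // [[_ /= h1] [_ /= h2]]; rewrite h2 ltxx in h1.
have mE1 : measurable [set w | Y w = 1] by exact: mpre mY (measurable_set1 1).
have mE2 : measurable [set w | Y w = -1] by exact: mpre mY (measurable_set1 (-1)).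
rewrite /Sp /Sm CE !measSU //.
have h1 : (P (Sp Y C1) <= P (Sm Y C1))%E.
  rewrite -eSp -eSm; apply: (key_pos mY' HY' mg' hopt') => //.
  by move=> x [_ /= h]; lra.
have h2 : (P (Sp Y C2) <= P (Sm Y C2))%E.
  apply: le_r1E; try exact: mSm; try exact: mSp.
  move=> r r1; have [t [ht1 ht2]] := Q4 r1.
  by apply: (zero_set mY HY mg hopt mC2 _ ht1 ht2) => x [].
exact: leeD h1 h2.
Qed.
End K2.
End KeyH.


Lemma mneq (a b : Omega -> R) : measurable_fun setT a -> measurable_fun setT b ->
  measurable [set w | a w != b w].
Proof.
move=> ma mb; rewrite (_ : [set w | _] = (fun w => a w - b w) @^-1` (~` [set 0])).
  by apply: mpre; [exact: measurable_funB|exact: measurableC].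
apply/seteqP; split => w /=.
  by move=> /eqP h1 h2; apply: h1; apply/eqP; rewrite -subr_eq0 h2.
by move=> h1; apply/eqP => h2; apply: h1; rewrite h2 subrr.
Qed.

Lemma measIC (E S : set Omega) : measurable E -> measurable S ->
  P E = (P (E `&` S) + P (E `&` ~` S))%E.
Proof.
move=> mE mS.
rewrite -{1}(setIT E) -(setUv S) setIUr; apply: measureU.
- exact: measurableI.
- by apply: measurableI => //; exact: measurableC.
by rewrite setIACA setICr setI0.
Qed.

Section Final.
Hypothesis Q3 : forall v, 0 < v -> phi v < phi (- v).
Hypothesis Q4 : forall r, 1 < r -> exists t, phi t < phi 0 /\ phi (- t) - phi 0 <= r * (phi 0 - phi t).
Variables (Y : Omega -> R) (g : T -> R).
Hypotheses (mY : measurable_fun setT Y) (HY : forall w, Y w = 1 \/ Y w = -1)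
  (mg : measurable_fun setT g)
  (hopt : forall g', measurable_fun setT g' -> (risk Y g <= risk Y g')%E).

Lemma mhs : measurable_fun setT (fun x => hsign (g x)).
Proof.
rewrite /hsign; apply: measurable_fun_ifT => //.
exact: measurable_fun_ler.
Qed.

Lemma bayes_le (f : T -> R) : measurable_fun setT f -> (forall x, f x = 1 \/ f x = -1) ->
  (P [set w | hsign (g (X w)) != Y w] <= P [set w | f (X w) != Y w])%E.
Proof.
move=> mf hf.
pose h := fun x => hsign (g x).
have mh : measurable_fun setT h := mhs.
have hh : forall x, (0 < g x -> h x = 1) /\ (g x <= 0 -> h x = -1).
  by move=> x; rewrite /h /hsign; split => gx; [rewrite leNgt gx|rewrite gx].
pose B := [set x | f x != h x].
have mB : measurable B.
  rewrite (_ : B = (fun x => f x - h x) @^-1` (~` [set 0])).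
    by apply: mpreT; [exact: measurable_funB|exact: measurableC].
  apply/seteqP; split => x /=.
    by move=> /eqP h1 h2; apply: h1; apply/eqP; rewrite -subr_eq0 h2.
  by move=> h1; apply/eqP => h2; apply: h1; rewrite h2 subrr.
have mXB := mpreX mB.
have mEh : measurable [set w | hsign (g (X w)) != Y w].
  exact: (@mneq (fun w => h (X w)) Y (measurableT_comp mh mX) mY).
have mEf : measurable [set w | f (X w) != Y w].
  exact: (@mneq (fun w => f (X w)) Y (measurableT_comp mf mX) mY).
rewrite (measIC mEh mXB) (measIC mEf mXB).
have -> : [set w | hsign (g (X w)) != Y w] `&` ~` (X @^-1` B) =
          [set w | f (X w) != Y w] `&` ~` (X @^-1` B).
  apply/seteqP; split => w /= [h1 h2]; split => //.
    by move: h2; rewrite /B /h /= => /negP; rewrite negbK => /eqP ->.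
  by move: h2; rewrite /B /h /= => /negP; rewrite negbK => /eqP <-.
apply: leeD2r.
pose B1 := B `&` [set x | 0 < g x]; pose B2 := B `&` [set x | g x <= 0].
have mB1 : measurable B1.
  apply: measurableI => //; rewrite (_ : [set x | _] = g @^-1` [set` `]0, +oo[]).
    exact: mpreT mg (measurable_itv _).
  by apply/seteqP; split => x /=; rewrite in_itv /= andbT.
have mB2 : measurable B2.
  apply: measurableI => //; rewrite (_ : [set x | _] = g @^-1` [set` `]-oo, 0]]).
    exact: mpreT mg (measurable_itv _).
  by apply/seteqP; split => x /=; rewrite in_itv.
have BE : B = B1 `|` B2.
  apply/seteqP; split => x.
    by move=> Bx; have [gx|gx] := ltP 0 (g x); [left|right].
  by case=> -[].
have d12 : B1 `&` B2 = set0.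
  apply/seteqP; split => x // [[_ /= h1] [_ /= h2]].
  by move: h1; rewrite ltNge h2.
rewrite !(setIC _ (X @^-1` B)) BE !measSU //.
have fh : forall x, B x -> f x = - h x.
  move=> x; rewrite /B /= => /eqP fx.
  case: (hf x) => fe; rewrite fe in fx *; case: (hh x) => h1 h2.
    have [gx|gx] := ltP 0 (g x); [by rewrite h1 // in fx|by rewrite h2 // opprK].
  have [gx|gx] := ltP 0 (g x); [by rewrite h1|by rewrite h2 // in fx].
have e1 : X @^-1` B1 `&` [set w | hsign (g (X w)) != Y w] = Sm Y B1.
  apply/seteqP; split => w [[hB hg] hY]; split => //=; move: hY; rewrite /= -[hsign (g (X w))]/(h (X w)) (proj1 (hh _)) //.
    by case: (HY w) => ->; rewrite ?eqxx // => _.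
  by move=> ->; apply/eqP; lra.
have e2 : X @^-1` B2 `&` [set w | hsign (g (X w)) != Y w] = Sp Y B2.
  apply/seteqP; split => w [[hB hg] hY]; split => //=; move: hY; rewrite /= -[hsign (g (X w))]/(h (X w)) (proj2 (hh _)) //.
    by case: (HY w) => ->; rewrite ?eqxx // => _.
  by move=> ->; apply/eqP; lra.
have e3 : X @^-1` B1 `&` [set w | f (X w) != Y w] = Sp Y B1.
  apply/seteqP; split => w [[hB hg] hY]; split => //=; move: hY; rewrite /= fh // (proj1 (hh _)) //.
    by case: (HY w) => ->; rewrite ?eqxx // => _.
  by move=> ->; apply/eqP; lra.
have e4 : X @^-1` B2 `&` [set w | f (X w) != Y w] = Sm Y B2.
  apply/seteqP; split => w [[hB hg] hY]; split => //=; move: hY; rewrite /= fh // (proj2 (hh _)) // opprK.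
    by case: (HY w) => ->; rewrite ?eqxx // => _.
  by move=> ->; apply/eqP; lra.
rewrite e1 e2 e3 e4; apply: leeD.
  by apply: (key_pos Q3 mY HY mg hopt mB1) => x [].
by apply: (key_neg Q3 Q4 mY HY mg hopt mB2) => x [].
Qed.

Lemma bayes :
  P [set w | hsign (g (X w)) != Y w] =
  ereal_inf [set P [set w | f (X w) != Y w] | f in
     [set f : T -> R | measurable_fun setT f /\ forall x, f x = 1 \/ f x = -1]].
Proof.
apply/eqP; rewrite eq_le; apply/andP; split.
  by apply: le_ereal_inf_tmp => _ [f [mf hf] <-]; exact: bayes_le.
apply: ereal_inf_lbound; exists (fun x => hsign (g x)) => //; split; first exact: mhs.
by move=> x; rewrite /hsign; case: ifP; [right|left].
Qed.
End Final.

End Abstract.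

Unset Implicit Arguments.

Theorem corollary2 (R : realType) (dm : measure_display)
  (Omega : measurableType dm) (P : probability Omega R) (d : nat)
  (X : Omega -> d.-tuple R) (Y : Omega -> R)
  (mX : measurable_fun setT X) (mY : measurable_fun setT Y)
  (HY : forall w, Y w = 1 \/ Y w = -1)
  (alpha : R) (ha0 : 0 <= alpha) (ha1 : alpha < 1) (k : loss_kind)
  (gbar : d.-tuple R -> R) (mgbar : measurable_fun setT gbar)
  (hgbar : forall g : d.-tuple R -> R, measurable_fun setT g ->
     (\int[P]_w (loss k alpha (Y w * gbar (X w)))%:E <=
      \int[P]_w (loss k alpha (Y w * g (X w)))%:E)%E) :
  P [set w | hsign (gbar (X w)) != Y w] =
  ereal_inf [set P [set w | f (X w) != Y w] | f in
     [set f : d.-tuple R -> R | measurable_fun setT f /\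
        forall x, f x = 1 \/ f x = -1]].

Proof.
have [Q1 Q2 Q3 Q4] := loss_all k ha0 ha1.
exact: (bayes mX Q1 Q2 Q3 Q4 mY HY mgbar hgbar).
Qed.
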